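(* Let $(W,\rho)$ be a rational $\mathfrak{sl}(2)$-module and let $C_\rho$ be its Casimir operator. Then the minimal polynomial $M_{C_\rho}(t)$ of $C_\rho$, regarded as a $\mathbb{C}(z)$-linear endomorphism of the finite-dimensional $\mathbb{C}(z)$-vector space $W$, has all its coefficients in $\mathbb{C}$, i.e. $M_{C_\rho}(t)\in\mathbb{C}[t]$. Consequently, $C_\rho$ regarded as a $\mathbb{C}$-linear endomorphism of $W$ has minimal polynomial $M_{C_\rho}(t)$.
   Context: $\mathfrak{sl}(2)$ is the complex Lie algebra with Chevalley basis $e,f,h$, $[e,f]=h$, $[h,e]=2e$, $[h,f]=-2f$; put $L_{-1}=f$, $L_0=-\tfrac12 h$, $L_1=-e$. Every $\mathfrak{sl}(2)$-module $(V,\rho)$ is a $\mathbb{C}[z]$-module via $z\cdot v=\rho(L_0)(v)$. The Casimir operator of $(V,\rho)$ is $C_\rho=\rho(L_0)(\rho(L_0)-1)-\rho(L_{-1})\rho(L_1)$. An $\mathfrak{sl}(2)$-module is called rational if, with this $\mathbb{C}[z]$-module structure, it is a finite-dimensional $\mathbb{C}(z)$-vector space (i.e. the $\mathbb{C}[z]$-action extends to a $\mathbb{C}(z)$-vector space structure of finite dimension). For a rational module, $C_\rho$ is $\mathbb{C}(z)$-linear. *)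

(* Defs.v *)
(* The complex numbers are modelled as R[i] = complex R
   for R : realType (mathcomp-real-closed's complex numbers over the reals). *)
From mathcomp Require Import all_boot all_algebra.
From mathcomp Require Import reals.
From mathcomp.real_closed Require Export complex.
Set Implicit Arguments.
Unset Strict Implicit.
Unset Printing Implicit Defensive.
Import GRing.Theory.
Local Open Scope ring_scope.

Definition Cz (R : realType) : fieldType := {fraction {poly R[i]}}.

Definition cst (R : realType) (c : R[i]) : Cz R := @FracField.tofrac {poly R[i]} (c%:P).

Definition zvar (R : realType) : Cz R := @FracField.tofrac {poly R[i]} 'X.

(* A rational sl(2)-module is modelled as a finite-dimensional C(z)-vector
   space W (vectType (Cz R)), the C-structure being the restriction of
   scalars along cst, together with C-linear maps rho(e), rho(f), rho(h). *)
Definition Clinear (R : realType) (W : vectType (Cz R)) (g : W -> W) :=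
  (forall u v, g (u + v) = g u + g v) /\
  (forall (c : R[i]) v, g (cst c *: v) = cst c *: g v).

Definition is_sl2_module (R : realType) (W : vectType (Cz R))
    (e f h : W -> W) :=
  [/\ Clinear e, Clinear f, Clinear h &
   forall v,
     [/\ e (f v) - f (e v) = h v,
         h (e v) - e (h v) = e v *+ 2 &
         h (f v) - f (h v) = - (f v *+ 2)]].

Definition rhoLm1 (R : realType) (W : vectType (Cz R)) (f : W -> W) : W -> W :=
  f.
Definition rhoL0 (R : realType) (W : vectType (Cz R)) (h : W -> W) : W -> W :=
  fun v => cst (- (2%:R)^-1) *: h v.
Definition rhoL1 (R : realType) (W : vectType (Cz R)) (e : W -> W) : W -> W :=
  fun v => - e v.

(* Rationality: the C(z)-scalar action extends the C[z]-action z.v = rho(L0) v. *)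
Definition z_acts_as_L0 (R : realType) (W : vectType (Cz R)) (h : W -> W) :=
  forall v : W, zvar R *: v = rhoL0 h v.

Definition casimir (R : realType) (W : vectType (Cz R)) (e f h : W -> W) :
    W -> W :=
  fun v => rhoL0 h (rhoL0 h v - v) - rhoLm1 f (rhoL1 e v).

Definition pevalK (R : realType) (W : vectType (Cz R)) (p : {poly Cz R})
    (g : W -> W) (v : W) : W :=
  \sum_(i < size p) p`_i *: iter i g v.

Definition pevalC (R : realType) (W : vectType (Cz R)) (p : {poly R[i]})
    (g : W -> W) (v : W) : W :=
  \sum_(i < size p) cst p`_i *: iter i g v.

Definition is_minpolyK (R : realType) (W : vectType (Cz R)) (p : {poly Cz R})
    (g : W -> W) :=
  [/\ p \is monic,
      forall v, pevalK p g v = 0 &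
      forall q : {poly Cz R}, (forall v, pevalK q g v = 0) -> p %| q].

Definition is_minpolyC (R : realType) (W : vectType (Cz R)) (p : {poly R[i]})
    (g : W -> W) :=
  [/\ p \is monic,
      forall v, pevalC p g v = 0 &
      forall q : {poly R[i]}, (forall v, pevalC q g v = 0) -> p %| q].

(* Main.v *)
From HB Require Import structures.
Require Import Defs.
From mathcomp Require Import all_boot all_algebra.
From mathcomp Require Import reals.
From mathcomp.real_closed Require Import complex.
From mathcomp Require Import ring.
From Stdlib Require Import Classical.
Import GRing.Theory Num.Theory.
Local Open Scope ring_scope.
Import VectorInternalTheory.
Lemma frac_repr (T : idomainType) (x : {fraction T}) :
  x = (@FracField.tofrac T (\n_(repr x))) / (@FracField.tofrac T (\d_(repr x))).
Proof.
rewrite -{1}(reprK x); move: (repr x) => r.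
have hd : @FracField.tofrac T (\d_r) != 0 by rewrite tofrac_eq0 denom_ratioP.
apply: (mulIf hd); rewrite divfK //.
rewrite /FracField.tofrac; unlock.
rewrite !piE.
apply/eqmodP; rewrite /= FracField.equivfE /FracField.mulf /=.
rewrite !numden_Ratio ?mulf_neq0 ?oner_neq0 ?denom_ratioP //.
by rewrite !mulr1 mulrC.
Qed.

HB.instance Definition _ (R : realType) :=
  GRing.RMorphism.copy (@cst R) (@FracField.tofrac {poly R[i]} \o polyC).

Section Poly.
Variable F : numClosedFieldType.

Definition shp (d : F) (p : {poly F}) := p \Po ('X + d%:P).

Lemma shpD d p q : shp d (p + q) = shp d p + shp d q.
Proof. exact: comp_polyD. Qed.
Lemma shpM d p q : shp d (p * q) = shp d p * shp d q.
Proof. exact: comp_polyM. Qed.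
Lemma shpC d c : shp d c%:P = c%:P.
Proof. exact: comp_polyC. Qed.
Lemma shpX d : shp d 'X = 'X + d%:P.
Proof. exact: comp_polyX. Qed.
Lemma shpK d p : shp (- d) (shp d p) = p.
Proof.
rewrite /shp -comp_polyA comp_polyD comp_polyX comp_polyC -addrA -polyCD.
by rewrite addNr addr0 comp_polyXr.
Qed.
Lemma shp_eq0 d p : (shp d p == 0) = (p == 0).
Proof.
apply/eqP/eqP => [H|->]; last by rewrite /shp comp_poly0.
by rewrite -(shpK d p) H /shp comp_poly0.
Qed.
Lemma horner_shp d p x : (shp d p).[x] = p.[x + d].
Proof. by rewrite /shp horner_comp !hornerE. Qed.

Lemma ev_nonroot {p : {poly F}} : p != 0 ->
  exists k0, forall k, (k0 <= k)%N -> p.[k%:R] != 0.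
Proof.
move: {2}(size p) (leqnn (size p)) => s; elim: s p => [|s IH] p.
  by rewrite leqn0 size_poly_eq0 => /eqP ->; rewrite eqxx.
move=> hs p0.
case: (classic (exists k : nat, root p k%:R)) => [[k /factor_theorem [q Dp]]|Hn]; last first.
  exists 0%N => k _; apply/negP => /rootP/eqP H; apply: Hn; exists k; exact/rootP/eqP.
have q0 : q != 0 by apply: contraNneq p0 => q0; rewrite Dp q0 mul0r.
have : (size q <= s)%N.
  move: hs; rewrite Dp size_mul ?polyXsubC_eq0 // size_XsubC addn2 /=.
  by [].
move=> /IH /(_ q0) [k1 Hk1].
exists (maxn k1 k.+1) => j; rewrite geq_max => /andP [j1 j2].
rewrite Dp hornerM mulf_neq0 ?Hk1 // !hornerE subr_eq0 eqr_nat.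
by apply/eqP => ej; move: j2; rewrite ej ltnn.
Qed.

Lemma shift_inv_const (n d : {poly F}) : d != 0 ->
  shp 1 n * d = n * shp 1 d -> exists c, n = c%:P * d.
Proof.
move=> d0 E.
have [k0 Hk0] := ev_nonroot d0.
pose c := n.[k0%:R] / d.[k0%:R].
pose P := n - c%:P * d.
have EP : shp 1 P * d = P * shp 1 d.
  rewrite /P shpD.
  have -> : shp 1 (- (c%:P * d)) = - (c%:P * shp 1 d).
    by rewrite -mulNr -polyCN shpM shpC polyCN mulNr.
  by rewrite mulrBl E; ring.
have Hr : forall j, P.[(k0 + j)%:R] = 0.
  elim=> [|j IHj].
    by rewrite addn0 /P !hornerE /c divfK ?Hk0 // subrr.
  have := congr1 (fun q => q.[(k0 + j)%:R]) EP => /=.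
  rewrite !hornerM !horner_shp IHj mul0r natr1 addnS.
  move/eqP; rewrite mulf_eq0 (negbTE (Hk0 _ _)) ?leq_addr // orbF.
  by move/eqP.
exists c; have [P0|P0] := eqVneq P 0.
  by apply/eqP; rewrite -subr_eq0 -/P P0.
have [k1 Hk1] := ev_nonroot P0.
by have := Hk1 (k0 + k1)%N (leq_addl _ _); rewrite Hr eqxx.
Qed.

End Poly.
Arguments shp {F} d p.
Arguments shift_inv_const {F n d}.
Section Field.
Variable R : realType.
Local Notation K := (Cz R).
Local Notation tf := (@FracField.tofrac {poly R[i]}).
Local Notation z := (zvar R).

Lemma natK_neq0 n : ((n.+1)%:R : K) != 0.
Proof.
by rewrite -(rmorph_nat (@cst R)) fmorph_eq0 pnatr_eq0.
Qed.

Lemma cst_tf (c : R[i]) : cst c = tf c%:P. Proof. by []. Qed.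

Lemma addit0 {W : vectType K} {g : W -> W} :
  (forall u v, g (u + v) = g u + g v) -> g 0 = 0.
Proof. by move=> gD; apply: (addrI (g 0)); rewrite -gD !addr0. Qed.

Lemma additN {W : vectType K} {g : W -> W} :
  (forall u v, g (u + v) = g u + g v) -> forall v, g (- v) = - g v.
Proof.
move=> gD v; apply/eqP; rewrite -subr_eq0 opprK -gD addNr.
by rewrite (addit0 gD).
Qed.

Lemma additMn {W : vectType K} {g : W -> W} :
  (forall u v, g (u + v) = g u + g v) -> forall v n, g (v *+ n) = g v *+ n.
Proof.
move=> gD v; elim=> [|n IH]; first by rewrite !mulr0n (addit0 gD).
by rewrite !mulrS gD IH.
Qed.

Lemma additsum {W : vectType K} {g : W -> W} :
  (forall u v, g (u + v) = g u + g v) ->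
  forall n (F : 'I_n -> W), g (\sum_(i < n) F i) = \sum_(i < n) g (F i).
Proof.
move=> gD; elim=> [|n IH] F; first by rewrite !big_ord0 (addit0 gD).
by rewrite !big_ord_recr /= gD IH.
Qed.

Lemma semil {W : vectType K} {g : W -> W} {d : R[i]} :
  (forall u v, g (u + v) = g u + g v) ->
  (forall c v, g (cst c *: v) = cst c *: g v) ->
  (forall v, g (z *: v) = (z + cst d) *: g v) ->
  forall p v, g (tf p *: v) = tf (shp d p) *: g v.
Proof.
move=> gD gC gz; elim/poly_ind => [|p c IH] v.
  by rewrite /shp comp_poly0 !rmorph0 !scale0r (addit0 gD).
rewrite shpD shpM shpX shpC !rmorphD !rmorphM /= scalerDl gD -cst_tf gC.
rewrite -scalerA IH gz scalerA scalerDl.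
rewrite [tf ('X + _)]rmorphD /=.
by rewrite /zvar /cst.
Qed.

Lemma semil_frac {W : vectType K} {g : W -> W} {d : R[i]} :
  (forall u v, g (u + v) = g u + g v) ->
  (forall c v, g (cst c *: v) = cst c *: g v) ->
  (forall v, g (z *: v) = (z + cst d) *: g v) ->
  forall p q v, q != 0 ->
    g ((tf p / tf q) *: v) = (tf (shp d p) / tf (shp d q)) *: g v.
Proof.
move=> gD gC gz p q v q0.
have tq0 : tf q != 0 by rewrite tofrac_eq0.
have tsq0 : tf (shp d q) != 0 by rewrite tofrac_eq0 shp_eq0.
pose w := (tf q)^-1 *: v.
have Ev : v = tf q *: w by rewrite /w scalerA (mulfV tq0) scale1r.
have Eg : g w = (tf (shp d q))^-1 *: g v.
  by rewrite Ev (semil gD gC gz) scalerA (mulVf tsq0) scale1r.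
rewrite {1}Ev scalerA (mulfVK tq0) (semil gD gC gz) Eg scalerA.
reflexivity.
Qed.

Definition numF (x : K) := \n_(repr x).
Definition denF (x : K) := \d_(repr x).
Lemma denF_neq0 x : denF x != 0. Proof. exact: denom_ratioP. Qed.
Lemma numden x : x = tf (numF x) / tf (denF x). Proof. exact: frac_repr. Qed.

Definition sigF (x : K) := tf (shp 1 (numF x)) / tf (shp 1 (denF x)).

Lemma tf_frac_eq (p q p' q' : {poly R[i]}) : q != 0 -> q' != 0 ->
  (tf p / tf q == tf p' / tf q') = (p * q' == p' * q).
Proof.
move=> q0 q'0.
have tq0 : tf q != 0 by rewrite tofrac_eq0.
have tq'0 : tf q' != 0 by rewrite tofrac_eq0.
rewrite -[p * q' == _]tofrac_eq !rmorphM /= (eqr_div _ _ tq0 tq'0).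
reflexivity.
Qed.

Lemma sigF_frac p q : q != 0 -> sigF (tf p / tf q) = tf (shp 1 p) / tf (shp 1 q).
Proof.
move=> q0; rewrite /sigF; apply/eqP.
rewrite tf_frac_eq ?shp_eq0 ?denF_neq0 //.
have := numden (tf p / tf q) => /eqP; rewrite eq_sym tf_frac_eq ?denF_neq0 //.
by move/eqP => E; rewrite -!shpM E.
Qed.

Lemma sigF1 : sigF 1 = 1.
Proof.
have -> : (1 : K) = tf 1 / tf 1 by rewrite rmorph1 divr1.
by rewrite sigF_frac ?oner_neq0 // /shp comp_polyC rmorph1 divr1.
Qed.

Lemma sigF_fix x : sigF x = x -> exists c, x = cst c.
Proof.
move=> E0.
have : tf (shp 1 (numF x)) / tf (shp 1 (denF x)) == tf (numF x) / tf (denF x).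
  by rewrite -numden; apply/eqP.
rewrite tf_frac_eq ?shp_eq0 ?denF_neq0 // => /eqP E.
have [c Ec] := shift_inv_const (denF_neq0 x) E.
exists c; rewrite (numden x) Ec rmorphM /= mulfK ?tofrac_eq0 ?denF_neq0 //.
Qed.



Fixpoint orb {W : vectType K} (b : W -> W) (v : W) (n : nat) : seq W :=
  if n is n'.+1 then iter n' b v :: orb b v n' else [::].

Lemma orbP {W : vectType K} (b : W -> W) v n x :
  x \in orb b v n -> exists2 k, (k < n)%N & x = iter k b v.
Proof.
elim: n => [|n IH] //=; rewrite in_cons => /orP [/eqP ->|/IH [k kn ->]].
  by exists n.
by exists k => //; apply: ltnW.
Qed.

Lemma size_orb {W : vectType K} (b : W -> W) v n : size (orb b v n) = n.
Proof. by elim: n => //= n ->. Qed.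

Lemma span_map {W : vectType K} (a : W -> W) :
  (forall u w, a (u + w) = a u + a w) ->
  (forall x w, exists y, a (x *: w) = y *: a w) ->
  forall (s : seq W) (U : {vspace W}), (forall x, x \in s -> a x \in U) ->
  forall u, u \in <<s>>%VS -> a u \in U.
Proof.
move=> aD aZ; elim=> [|x s IH] U Hs u.
  by rewrite span_nil memv0 => /eqP ->; rewrite (addit0 aD) mem0v.
rewrite span_cons => /memv_addP [u1 /vlineP [k ->] [u2 u2s ->]].
rewrite aD; apply: memvD; last first.
  by apply: IH => // y ys; apply: Hs; rewrite in_cons ys orbT.
have [y ->] := aZ k x; apply: memvZ; apply: Hs; exact: mem_head.
Qed.

Lemma lower_inj {W : vectType K} (a b : W -> W) (c : nat -> K) (v : W) :
  (forall u w, a (u + w) = a u + a w) ->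
  (forall x w, exists y, a (x *: w) = y *: a w) ->
  (forall n, a (iter n.+1 b v) = c n *: iter n b v) ->
  (forall n, c n != 0) -> a v = 0 -> v = 0.
Proof.
move=> aD aZ aS c0 av0; apply/eqP; apply/negPn/negP => v0.
have A : forall n u, u \in <<orb b v n.+1>>%VS -> a u \in <<orb b v n>>%VS.
  move=> n; apply: span_map => // x /orbP [[|k] kn ->].
    by rewrite /= av0 mem0v.
  rewrite aS; apply: memvZ; apply: memv_span.
  have kn' : (k < n)%N by [].
  clear kn; elim: n kn' => // n IH; rewrite ltnS leq_eqVlt => /orP [/eqP ->|kn].
    exact: mem_head.
  by rewrite /= in_cons IH ?orbT.
have B : forall n, iter n b v \notin <<orb b v n>>%VS.
  elim=> [|n IH]; first by rewrite /= span_nil memv0.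
  apply/negP => H; have := A n _ H; rewrite aS => H2.
  have : (c n)^-1 *: (c n *: iter n b v) \in <<orb b v n>>%VS by apply: memvZ.
  by rewrite scalerA mulVf // scale1r (negPf IH).
have C : forall n, free (orb b v n).
  elim=> [|n IH]; first by rewrite /free /= span_nil dimv0.
  by rewrite /= free_cons B IH.
have := C (\dim {: W}).+1; rewrite /free size_orb => /eqP E.
have := dimvS (subvf <<orb b v (\dim {: W}).+1>>%VS); rewrite E ltnn.
by [].
Qed.

Lemma minpolyK_exists {W : vectType K} {L : W -> W} :
  (forall u w, L (u + w) = L u + L w) ->
  (forall x w, L (x *: w) = x *: L w) ->
  exists M : {poly K}, is_minpolyK M L.
Proof.
move=> LD LZ.
have key : forall n (phi : {linear W -> 'rV[K]_n}) (psi : {linear 'rV[K]_n -> W}),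
    cancel phi psi -> cancel psi phi -> exists M : {poly K}, is_minpolyK M L.
  case=> [|n] phi psi phiK psiK.
    have W0 : forall w : W, w = 0.
      by move=> w; rewrite -(phiK w) (thinmx0 (phi w)) linear0.
    exists 1; split; first exact: monic1.
      by move=> w; apply: W0.
    by move=> q _; apply: dvd1p.
  pose A : 'M[K]_n.+1 := \matrix_(i, j) phi (L (psi (delta_mx 0 i))) 0 j.
  have LA : forall w, phi (L w) = phi w *m A.
    move=> w; rewrite -{1}(phiK w) [phi w]row_sum_delta.
    rewrite linear_sum (additsum LD) linear_sum.
    apply/rowP => j; rewrite !mxE summxE.
    apply: eq_bigr => i _; rewrite linearZ LZ linearZ !mxE.
    by rewrite -row_sum_delta.
  have LX : forall k w, phi (iter k L w) = phi w *m A ^+ k.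
    elim=> [|k IH] w; first by rewrite /= expr0 mulmx1.
    by rewrite iterS LA IH exprSr -mulmxA mulmxE.
  have HM : forall p w, phi (pevalK p L w) = phi w *m horner_mx A p.
    move=> p w; rewrite /pevalK linear_sum.
    rewrite -[in RHS](coefK p) poly_def rmorph_sum mulmx_sumr.
    apply: eq_bigr => i _; rewrite linearZ LX /=.
    by rewrite horner_mxZ rmorphXn /= horner_mx_X scalemxAr.
  exists (mxminpoly A); split; first exact: mxminpoly_monic.
    by move=> w; rewrite -(phiK (pevalK _ _ _)) HM mx_root_minpoly mulmx0 linear0.
  move=> q Hq; apply: mxminpoly_min; apply/row_matrixP => i.
  by rewrite rowE row0 -[delta_mx 0 i]psiK -HM Hq linear0.
exact: (key _ _ _ v2rK r2vK).
Qed.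

Lemma const_poly (M : {poly K}) :
  (forall i, exists c, M`_i = cst c) -> exists m, M = map_poly (@cst R) m.
Proof.
elim/poly_ind: M => [|M a IH] H; first by exists 0; rewrite rmorph0.
have [m Hm] : exists m, M = map_poly (@cst R) m.
  apply: IH => i; have [c Hc] := H i.+1; exists c.
  by rewrite -Hc coefD coefMX coefC /= addr0.
have [c Hc] := H 0%N.
move: Hc; rewrite coefD coefMX coefC /= add0r => ->.
by exists (m * 'X + c%:P); rewrite rmorphD rmorphM /= map_polyX map_polyC -Hm.
Qed.

Section SL2.
Variable W : vectType K.
Variables e f h : W -> W.
Hypothesis Hsl : is_sl2_module e f h.
Hypothesis Hz : z_acts_as_L0 h.

Let eD : forall u v, e (u + v) = e u + e v. Proof. by case: Hsl => [[]]. Qed.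
Let fD : forall u v, f (u + v) = f u + f v. Proof. by case: Hsl => _ [] . Qed.
Let eC : forall c v, e (cst c *: v) = cst c *: e v. Proof. by case: Hsl => [[]]. Qed.
Let fC : forall c v, f (cst c *: v) = cst c *: f v. Proof. by case: Hsl => _ []. Qed.
Let ef v : e (f v) - f (e v) = h v. Proof. by case: Hsl => _ _ _ /(_ v) []. Qed.
Let he v : h (e v) - e (h v) = e v *+ 2. Proof. by case: Hsl => _ _ _ /(_ v) []. Qed.
Let hf v : h (f v) - f (h v) = - (f v *+ 2). Proof. by case: Hsl => _ _ _ /(_ v) []. Qed.

Let two : (2%:R : K) != 0. Proof. exact: natK_neq0 1. Qed.

Let cstN2 : cst (- 2%:R) = - (2%:R : K).
Proof. by rewrite rmorphN rmorph_nat. Qed.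

Let hE v : h v = (- 2%:R * z) *: v.
Proof.
rewrite -scalerA (Hz v) /rhoL0 scalerA.
have -> : cst (- (2%:R)^-1) = - (2%:R : K)^-1 by rewrite rmorphN fmorphV rmorph_nat.
by rewrite mulrNN mulfV // scale1r.
Qed.

Let n2 : (- 2%:R : K) != 0. Proof. by rewrite oppr_eq0. Qed.

Let ezE v : e (z *: v) = (z + 1) *: e v.
Proof.
have E1 : e ((- 2%:R * z) *: v) = (- 2%:R) *: e (z *: v).
  by rewrite -scalerA -cstN2 eC.
have := he v; rewrite !hE E1 => H.
have H2 : (- 2%:R) *: e (z *: v) = (- 2%:R * z) *: e v - e v *+ 2.
  by rewrite -H subKr.
apply: (scalerI n2); rewrite H2 scalerA -scaler_nat -scalerBl.
by congr (_ *: _); ring.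
Qed.

Let fzE v : f (z *: v) = (z - 1) *: f v.
Proof.
have E1 : f ((- 2%:R * z) *: v) = (- 2%:R) *: f (z *: v).
  by rewrite -scalerA -cstN2 fC.
have := hf v; rewrite !hE E1 => H.
have H2 : (- 2%:R) *: f (z *: v) = (- 2%:R * z) *: f v + f v *+ 2.
  by rewrite -[f v *+ 2]opprK -H subKr.
apply: (scalerI n2); rewrite H2 scalerA -scaler_nat -scalerDl.
by congr (_ *: _); ring.
Qed.

Let ez1 v : e (z *: v) = (z + cst 1) *: e v. Proof. by rewrite rmorph1 ezE. Qed.
Let fz1 v : f (z *: v) = (z + cst (- 1)) *: f v.
Proof. by rewrite rmorphN rmorph1 fzE. Qed.

Let e_frac p q v : q != 0 ->
  e ((tf p / tf q) *: v) = (tf (shp 1 p) / tf (shp 1 q)) *: e v.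
Proof. exact: (semil_frac eD eC ez1). Qed.
Let f_frac p q v : q != 0 ->
  f ((tf p / tf q) *: v) = (tf (shp (- 1) p) / tf (shp (- 1) q)) *: f v.
Proof. exact: (semil_frac fD fC fz1). Qed.

Let fZex x w : exists y, f (x *: w) = y *: f w.
Proof.
rewrite (numden x); eexists; exact: f_frac (denF_neq0 x).
Qed.

Let f_sig x w : f (sigF x *: w) = x *: f w.
Proof.
rewrite /sigF f_frac ?shp_eq0 ?denF_neq0 // !shpK -numden.
by [].
Qed.

Local Notation Cas := (casimir e f h).

Let CasE v : Cas v = z *: (z *: v - v) + f (e v).
Proof.
rewrite /casimir -!Hz /rhoLm1 /rhoL1 (additN fD) opprK.
by [].
Qed.

Let CasD u v : Cas (u + v) = Cas u + Cas v.
Proof.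
rewrite !CasE eD fD !scalerDr.
rewrite opprD !scalerDr; rewrite !addrA; congr (_ + _).
rewrite -!addrA; congr (_ + _); rewrite addrC -!addrA; congr (_ + _).
by rewrite addrC -!addrA; congr (_ + _); rewrite addrC.
Qed.

Let CasZ x v : Cas (x *: v) = x *: Cas v.
Proof.
have Efe : f (e (x *: v)) = x *: f (e v).
  rewrite {1}(numden x) e_frac ?denF_neq0 // f_frac ?shp_eq0 ?denF_neq0 //.
  by rewrite !shpK -numden.
rewrite !CasE Efe !scalerDr !scalerN !scalerA.
by congr (_ *: _ + - (_ *: _) + _); ring.
Qed.

Let fe w : f (e w) = e (f w) - h w.
Proof. by rewrite -(ef w) subKr. Qed.

Let fh w : f (h w) = (- 2%:R * (z - 1)) *: f w.
Proof. by rewrite hE -scalerA -cstN2 fC fzE cstN2 scalerA. Qed.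

Let efv w : e (f w) = f (e w) + h w.
Proof. by rewrite -(ef w) subrKC. Qed.

Let fCas v : f (Cas v) = Cas (f v).
Proof.
rewrite !CasE efv.
rewrite [f (_ + h v)]fD fh.
rewrite [f (_ + f (e v))]fD fzE [f (_ - v)]fD (additN fD) fzE.
set F := f v; set G := f (f (e v)).
rewrite !scalerDr !scalerN !scalerA -!scaleNr.
rewrite [G + _]addrC !addrA -!scalerDl.
by congr (_ *: _ + _); ring.
Qed.

Let f_iter k w : f (iter k Cas w) = iter k Cas (f w).
Proof. by elim: k => //= k IH; rewrite fCas IH. Qed.

Definition cc (n : nat) : K := (n.+1)%:R * (z *+ 2 + n%:R).

Let eN k w : e (k%:R *: w) = k%:R *: e w.
Proof. rewrite !scaler_nat. exact: (additMn eD w k). Qed.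

Let fS v : f v = 0 -> forall n, f (iter n.+1 e v) = cc n *: iter n e v.
Proof.
move=> fv0; elim=> [|n IH].
  rewrite /= fe fv0 (addit0 eD) hE sub0r -scaleNr /cc.
  by congr (_ *: _); rewrite mulr1n; ring.
rewrite [iter n.+2 e v]/= fe IH hE /cc -scalerA eN scalerDl eD eN.
rewrite -[(z *+ 2) *: _]scalerMnl (additMn eD) ezE -[iter n.+1 e v]/(e (iter n e v)).
set E := e (iter n e v).
rewrite scalerMnl -scalerDl scalerA -scaleNr -scalerDl.
congr (_ *: _).
rewrite -[(n.+2)%:R]natr1 -[(n.+1)%:R]natr1.
ring.
Qed.

Let cc_neq0 n : cc n != 0.
Proof.
rewrite /cc; apply: mulf_neq0; first exact: natK_neq0.
have -> : z *+ 2 + n%:R = tf ('X *+ 2 + n%:R).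
  by rewrite rmorphD rmorphMn rmorph_nat.
rewrite tofrac_eq0; apply/eqP => H.
have := congr1 (fun p : {poly R[i]} => p`_1) H.
rewrite coefD coefMn coefX coefMn coef1 /= coef0 mul0rn addr0 => /eqP.
by rewrite pnatr_eq0.
Qed.

Let f_inj v : f v = 0 -> v = 0.
Proof.
move=> fv0; exact: (@lower_inj W f e cc v fD fZex (fS v fv0) cc_neq0 fv0).
Qed.

Lemma main_sec : exists m : {poly R[i]},
    is_minpolyK (map_poly (@cst R) m) Cas /\ is_minpolyC m Cas.
Proof.
have [M [Mmon Mann Mmin]] := minpolyK_exists (L := Cas) CasD CasZ.
pose N := \poly_(i < size M) sigF M`_i.
have lM : M`_(size M).-1 = 1 by move/monicP: Mmon.
have sN : size N = size M.
  by apply: size_poly_eq; rewrite lM sigF1; apply: oner_neq0.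
have NMann : forall w, pevalK N Cas w = 0.
  move=> w; apply: f_inj; rewrite /pevalK (additsum fD).
  have -> : \sum_(i < size N) f (N`_i *: iter i Cas w)
          = \sum_(i < size M) M`_i *: iter i Cas (f w).
    rewrite sN; apply: eq_bigr => i _.
    by rewrite coef_poly ltn_ord f_sig f_iter.
  exact: Mann.
have MN : M = N.
  have Nmon : N \is monic.
    have sM0 : (0 < size M)%N by rewrite lt0n size_poly_eq0 (monic_neq0 Mmon).
    by apply/monicP; rewrite /lead_coef sN coef_poly ltn_predL sM0 lM sigF1.
  apply/eqP; rewrite -(eqp_monic Mmon Nmon) -(dvdp_size_eqp (Mmin N NMann)) sN.
  exact: eqxx.
have Mc : forall i, exists c, M`_i = cst c.
  move=> i; case: (ltnP i (size M)) => hi.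
    apply: sigF_fix; have := congr1 (fun p : {poly K} => p`_i) MN.
    by rewrite /= coef_poly hi => <-.
  by exists 0; rewrite nth_default // rmorph0.
have [m Mm] := const_poly M Mc.
have pC : forall q w, pevalC q Cas w = pevalK (map_poly (@cst R) q) Cas w.
  move=> q w; rewrite /pevalC /pevalK size_map_poly.
  by apply: eq_bigr => i _; rewrite coef_map.
exists m; rewrite -Mm; split => //; split.
- by rewrite -(map_monic (@cst R)) -Mm.
- by move=> w; rewrite pC -Mm.
- move=> q Hq; rewrite -(dvdp_map (@cst R)) -Mm; apply: Mmin => w.
  by rewrite -pC.
Qed.

End SL2.
End Field.

Theorem theorem6p1 (R : realType) (W : vectType (Cz R)) (e f h : W -> W) :
  is_sl2_module e f h -> z_acts_as_L0 h ->
  exists m : {poly R[i]},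
    is_minpolyK (map_poly (@cst R) m) (casimir e f h) /\
    is_minpolyC m (casimir e f h).
Proof. move=> Hsl Hz; exact: main_sec. Qed.
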